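(* Suppose Assumptions A1–A3 and the homoscedastic part of Assumption A4 hold. Let there exist a valid coplanar instrument $\mathbf z_0\in\mathcal W(\mathbf x,\mathbf y)$ such that \[ \mathbb E(\mathbf u\mid\mathbf z_0)=\mathbf 0\quad\text{and}\quad \mathbb E(\mathbf e\mathbf e'\mid\mathbf z_0)=\sigma^2\mathbf I_n, \] where $\mathbf e$ is the first-stage residual. Let $\mathbf s(\delta)=\mathbf x+k\delta\mathbf r$, $\delta\in(0,\bar\delta)$, parameterize the class of candidate synthetic instruments, and let $\delta_0\in(0,\bar\delta)$ be such that $\mathbf s(\delta_0)=\mathbf z_0$. Let $\mathbf M(\delta)$ denote the DT moment vector. Then $\mathbf M(\delta_0)=\mathbf 0$. If $\mathbf M(\delta)$ is continuously differentiable in $\delta$ on $(0,\bar\delta)$ and its derivative at $\delta_0$, \[ J_{\mathbf M}(\delta_0):=\frac{\partial\mathbf M(\delta)}{\partial\delta}\Big|_{\delta=\delta_0}, \] is nonzero, then there exists a neighborhood $\mathcal N$ of $\delta_0$ such that for $\delta\in\mathcal N$: $\mathbf M(\delta)=\mathbf 0\iff\delta=\delta_0$. Hence $\delta_0$ is locally identified by the DT condition, and the synthetic instrument $\mathbf s^\star:=\mathbf s(\delta_0)=\mathbf z_0$ is the unique coplanar instrument in $\mathcal W(\mathbf x,\mathbf y)$ satisfying $\mathbb E(\mathbf u\mid\mathbf s^\star)=\mathbf 0$.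
   Context: Setting: all vectors are $n\times1$ random vectors (elements of a separable Hilbert space $\mathcal H$, e.g. $\mathbb R^n$ with the dot product). The structural model is $\mathbf y=\beta\mathbf x+\mathbf u$, where $\mathbf y$ is the outcome, $\mathbf x$ the endogenous regressor with $\operatorname{cov}(\mathbf x,\mathbf u)\neq0$, $\mathbf u$ the unobserved structural error and $\beta$ a scalar (exogenous controls have been partialled out by orthogonal projection). $\mathcal W(\mathbf x,\mathbf y)=\operatorname{span}\{\mathbf x,\mathbf y\}$. $\mathbf P_x=\mathbf x(\mathbf x'\mathbf x)^{-1}\mathbf x'$ and $\mathbf r=(\mathbf I-\mathbf P_x)\mathbf y$. $k:=-\operatorname{sign}(\operatorname{cov}(\mathbf x,\mathbf u))\in\{-1,+1\}$. For an instrument $\mathbf s$, the first-stage regression is $\mathbf x=\gamma\mathbf s+\mathbf e$ with $\gamma=\operatorname{cov}(\mathbf x,\mathbf s)/\operatorname{var}(\mathbf s)$; write $\mathbf e(\delta)=\mathbf x-\gamma(\delta)\mathbf s(\delta)$ for $\mathbf s=\mathbf s(\delta)$. The DT moment vector is $\mathbf M(\delta)=\mathbb E[(\mathbf e(\delta)^{\circ2}-\sigma^2\mathbf 1_n)\odot\mathbf z_0]$, where $\circ2$ is the entrywise square, $\odot$ the entrywise product and $\mathbf 1_n$ the vector of ones. Assumption A1 (Coplanarity): $\mathbf x,\mathbf r,\mathbf s$ belong to $\mathcal W(\mathbf x,\mathbf y)$; $\mathbb E[\mathbf r'\mathbf x]=0$; the observations $\mathbf Z_i$ of $(\mathbf y,\mathbf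 x,\mathbf r)$ are i.i.d. (or stationary and ergodic). Assumption A2 (Synthetic instrument): $\mathbf s=\mathbf x+k\delta\mathbf r$ with $\delta\in(0,\bar\delta)$, where $\bar\delta$ is a finite bound chosen so that $\operatorname{corr}(\mathbf s,\mathbf x)\ge c>0$; $\mathbf s$ affects $\mathbf y$ only through its $\mathbf x$-component, not through $\mathbf r$. Assumption A3 (Full rank): $\mathbb E[\mathbf x'\mathbf y]$ and $\mathbb E[\mathbf x'\mathbf x]$ exist and $\mathbb E[x^2]>0$. Assumption A4, homoscedastic part: the first-stage errors $e_i$ are independent across $i$ and $\mathbb E(e_i^2\mid\mathbf z_0)=\sigma^2$ for all $i$. *)

(* Defs.v *)
From HB Require Import structures.
From mathcomp Require Import all_boot all_order all_algebra.
From mathcomp Require Import all_classical all_reals all_analysis.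
Set Implicit Arguments. Unset Strict Implicit. Unset Printing Implicit Defensive.
Import Order.TTheory GRing.Theory Num.Theory.
Import numFieldNormedType.Exports.
Local Open Scope classical_set_scope.
Local Open Scope ring_scope.

(* Random n x 1 vectors are represented componentwise: a : 'I_n -> T -> R,
   component i is the real random variable (a i). *)
Section DT.
Context {d : measure_display} {T : measurableType d} {R : realType}.
Variable (P : probability T R) (n : nat).

Definition Ex (X : T -> R) : R := fine ('E_P[X])%E.

Definition dotE (a b : 'I_n -> T -> R) : R :=
  \sum_(i < n) Ex (fun w => a i w * b i w).

(* cov(a,b) = E[(a - E a)'(b - E b)] (Hilbert-space covariance) *)
Definition vcov (a b : 'I_n -> T -> R) : R :=
  \sum_(i < n) (Ex (fun w => a i w * b i w) - Ex (a i) * Ex (b i)).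
Definition vvar (a : 'I_n -> T -> R) : R := vcov a a.
Definition vcorr (a b : 'I_n -> T -> R) : R :=
  vcov a b / Num.sqrt (vvar a * vvar b).

Definition dotw (a b : 'I_n -> T -> R) (w : T) : R := \sum_(i < n) a i w * b i w.

(* r = (I - P_x) y, P_x = x (x'x)^-1 x' (realisation-wise) *)
Definition resid (x y : 'I_n -> T -> R) : 'I_n -> T -> R :=
  fun i w => y i w - (dotw x y w / dotw x x w) * x i w.

Definition ksign (x u : 'I_n -> T -> R) : R := - Num.sg (vcov x u).

Definition synth (x y u : 'I_n -> T -> R) (delta : R) : 'I_n -> T -> R :=
  fun i w => x i w + ksign x u * delta * resid x y i w.

Definition gam (x y u : 'I_n -> T -> R) (delta : R) : R :=
  vcov x (synth x y u delta) / vvar (synth x y u delta).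
Definition fs_err (x y u : 'I_n -> T -> R) (delta : R) : 'I_n -> T -> R :=
  fun i w => x i w - gam x y u delta * synth x y u delta i w.

Definition DTmoment (x y u z0 : 'I_n -> T -> R) (sigma2 : R) (delta : R)
  : 'rV[R]_n :=
  \row_(i < n) Ex (fun w => (fs_err x y u delta i w ^+ 2 - sigma2) * z0 i w).

Definition tupv (z : 'I_n -> T -> R) : T -> n.-tuple R :=
  fun w => [tuple z i w | i < n].

(* E(V | Z) = c (c a constant): V integrable and, for every measurable set
   B of R^n, E[V 1_{Z in B}] = c P(Z in B) -- the defining property of the
   conditional expectation, the constant c being sigma(Z)-measurable. *)
Definition cond_mean_const (V : T -> R) (Z : T -> n.-tuple R) (c : R) : Prop :=
  P.-integrable setT (EFin \o V) /\
  forall B : set (n.-tuple R), measurable B ->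
    (\int[P]_(w in Z @^-1` B) (V w)%:E = c%:E * P (Z @^-1` B))%E.

Definition indep_family {d'} {V : measurableType d'} (X : 'I_n -> T -> V) : Prop :=
  forall B : 'I_n -> set V, (forall i, measurable (B i)) ->
    P (\bigcap_(i in setT) (X i @^-1` B i)) = (\prod_(i < n) P (X i @^-1` B i))%E.

Definition ident_distr {d'} {V : measurableType d'} (X : 'I_n -> T -> V) : Prop :=
  forall (i j : 'I_n) (B : set V), measurable B ->
    P (X i @^-1` B) = P (X j @^-1` B).

End DT.

(* Main.v *)
Require Import Defs.
From HB Require Import structures.
From mathcomp Require Import all_boot all_order all_algebra.
From mathcomp Require Import all_classical all_reals all_analysis.
Import Order.TTheory GRing.Theory Num.Theory.
Import numFieldNormedType.Exports.
Local Open Scope classical_set_scope.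
Local Open Scope ring_scope.
From mathcomp Require Import measurable_realfun ring lra.
Set Implicit Arguments. Unset Strict Implicit. Unset Printing Implicit Defensive.
Import HBNNSimple.
Section key.
Local Open Scope ereal_scope.
Context d (T : measurableType d) (R : realType) (mu : {measure set T -> \bar R}).
Context d' (Y : measurableType d') (Z : T -> Y) (mZ : measurable_fun setT Z).

Lemma simple_step (W : T -> R) (mW : measurable_fun setT W)
  (W0 : forall x, (0 <= W x)%R) (h : {nnsfun Y >-> R}) :
  \int[mu]_x ((h (Z x)) * W x)%:E =
  \sum_(k \in range h) \int[mu]_x (k * \1_(h @^-1` [set k]) (Z x) * W x)%:E.
Proof.
rewrite -ge0_integral_fsum//.
- apply: eq_integral => x _; rewrite fsumEFin//; congr EFin.
  by rewrite [in LHS]fimfunE mulr_fsuml.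
- move=> k; apply/measurable_EFinP; apply: measurable_funM => //.
  apply: measurable_funM => //; apply: measurableT_comp => //.
- move=> k x _; rewrite lee_fin mulr_ge0//.
  have := @nnfun_muleindic_ge0 _ _ _ h k (Z x); by rewrite -EFinM lee_fin.
Qed.

Lemma term_step (W : T -> R) (mW : measurable_fun setT W)
  (W0 : forall x, (0 <= W x)%R) (A : set Y) (mA : measurable A) (k : R) :
  (0 <= k)%R ->
  \int[mu]_x (k * \1_A (Z x) * W x)%:E =
  k%:E * \int[mu]_(x in Z @^-1` A) (W x)%:E.
Proof.
move=> k0.
under eq_integral do rewrite -mulrA EFinM.
rewrite ge0_integralZl//; last 2 first.
- apply/measurable_EFinP; apply: measurable_funM => //.
  apply: measurableT_comp => //; exact/measurable_indicP.
- by move=> x _; rewrite lee_fin mulr_ge0.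
congr (_ * _); rewrite [RHS]integral_mkcond; apply: eq_integral => x _.
rewrite /patch indicE.
have -> : (x \in Z @^-1` A) = (Z x \in A).
  by apply/idP/idP => /set_mem H; apply/mem_set.
by case: (Z x \in A); rewrite ?mul1r ?mul0r.
Qed.

Lemma key (W1 W2 : T -> R) (mW1 : measurable_fun setT W1)
  (mW2 : measurable_fun setT W2)
  (W10 : forall x, (0 <= W1 x)%R) (W20 : forall x, (0 <= W2 x)%R)
  (H : forall B, measurable B ->
     \int[mu]_(x in Z @^-1` B) (W1 x)%:E = \int[mu]_(x in Z @^-1` B) (W2 x)%:E)
  (g : Y -> \bar R) (mg : measurable_fun setT g) (g0 : forall y, 0 <= g y) :
  \int[mu]_x (g (Z x) * (W1 x)%:E) = \int[mu]_x (g (Z x) * (W2 x)%:E).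
Proof.
pose h := nnsfun_approx measurableT mg.
have mono (W : T -> R) : measurable_fun setT W -> (forall x, (0 <= W x)%R) ->
    \int[mu]_x (g (Z x) * (W x)%:E) =
    limn (fun n => \int[mu]_x ((h n (Z x)) * W x)%:E).
  move=> mW W0.
  rewrite -monotone_convergence//; last 3 first.
  - move=> n; apply/measurable_EFinP; apply: measurable_funM => //.
    apply: measurableT_comp => //.
  - by move=> n x _; rewrite lee_fin mulr_ge0.
  - move=> x _ a b ab; rewrite lee_fin ler_wpM2r//.
    exact/lefP/nd_nnsfun_approx.
  apply: eq_integral => x _; apply/esym/cvg_lim => //.
  under eq_fun do rewrite EFinM.
  apply: cvgeZr => //; exact: cvg_nnsfun_approx.
rewrite (mono W1)// (mono W2)//; congr (lim (_ @ \oo)); apply/funext => n.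
rewrite !simple_step//; apply: eq_fsbigr => k _.
have [k0|k0] := ltP k 0%R.
  by rewrite preimage_nnfun0// !integral0_eq// => x _; rewrite indic0 mulr0 mul0r.
by rewrite !term_step// H.
Qed.
End key.

Section cz.
Local Open Scope ereal_scope.
Context d (T : measurableType d) (R : realType) (P : probability T R) (n : nat).

Definition pp (r : R) : R := ((r + `|r|) / 2)%R.

Lemma pp_ge0 r : (0 <= pp r)%R.
Proof.
rewrite /pp divr_ge0//; have [r0|r0] := leP 0%R r.
  by rewrite ger0_norm// addr_ge0.
by rewrite ltr0_norm// subrr.
Qed.

Lemma maxE0 r : Num.max r 0%R = pp r.
Proof.
rewrite /pp; have [r0|r0] := leP 0%R r.
  by rewrite ger0_norm//; field.
by rewrite ltr0_norm//; field.
Qed.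

Lemma mpp d0 (U : measurableType d0) (f : U -> R) : measurable_fun setT f -> measurable_fun setT (fun x => pp (f x)).
Proof.
move=> mf; rewrite /pp; apply: measurable_funM => //; apply: measurable_funD => //.
exact: measurableT_comp.
Qed.

Lemma ppM a b : pp (a * b) = (pp b * pp a + pp (- b) * pp (- a))%R.
Proof. by rewrite /pp !normrN normrM; field. Qed.

Lemma ppNM a b : pp (- (a * b)) = (pp b * pp (- a) + pp (- b) * pp a)%R.
Proof. by rewrite /pp !normrN normrM; field. Qed.

Lemma epos (g : T -> R) x : (EFin \o g)^\+ x = (pp (g x))%:E.
Proof. by rewrite funeposE (_ : 0 = 0%R%:E)// -EFin_max maxE0. Qed.

Lemma eneg (g : T -> R) x : (EFin \o g)^\- x = (pp (- g x))%:E.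
Proof. by rewrite funenegE (_ : 0 = 0%R%:E)// -EFinN -EFin_max maxE0. Qed.

Lemma fin_sub0 (a b : \bar R) : a \is a fin_num -> b \is a fin_num -> a - b = 0 -> a = b.
Proof.
move=> fa fb; rewrite -(fineK fa) -(fineK fb) -EFinB => -[] /eqP.
by rewrite subr_eq0 => /eqP ->.
Qed.

Lemma cond_zero (V : T -> R) (Zt : T -> n.-tuple R) (mZ : measurable_fun setT Zt)
  (c : R) (i : 'I_n) (H : cond_mean_const P V Zt c)
  (Hint : P.-integrable setT (EFin \o (fun w => (V w - c) * tnth (Zt w) i)%R)) :
  Ex P (fun w => (V w - c) * tnth (Zt w) i)%R = 0%R.
Proof.
have [intV HV] := H.
have mV : measurable_fun setT V.
  by apply/measurable_EFinP; case/integrableP: intV.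
set W := fun w => (V w - c)%R.
have mW : measurable_fun setT W by apply: measurable_funB.
have mf : measurable_fun setT (fun w => tnth (Zt w) i).
  exact: (measurableT_comp (measurable_tnth i) mZ).
have HB : forall B, measurable B ->
    \int[P]_(x in Zt @^-1` B) (pp (W x))%:E =
    \int[P]_(x in Zt @^-1` B) (pp (- W x))%:E.
  move=> B mB.
  have mA : measurable (Zt @^-1` B) by rewrite -(setTI (Zt @^-1` B)); exact: mZ.
  have iV : P.-integrable (Zt @^-1` B) (EFin \o V) by exact: integrableS intV.
  have ic : P.-integrable (Zt @^-1` B) (EFin \o cst c).
    exact: finite_measure_integrable_cst.
  have iW : P.-integrable (Zt @^-1` B) (EFin \o W).
    have -> : EFin \o W = (EFin \o V) \- (EFin \o cst c).
      by apply/funext => x; rewrite /= EFinB.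
    exact: integrableB.
  have h0 : \int[P]_(x in Zt @^-1` B) (W x)%:E = 0.
    under eq_integral do rewrite EFinB.
    rewrite integralB_EFin// (HV _ mB) (integral_cst _ mA c%:E) subee// fin_numM// fin_num_measure//.
  have fp := integrable_pos_fin_num mA iW.
  have fn := integrable_neg_fin_num mA iW.
  have e1 : \int[P]_(x in Zt @^-1` B) (EFin \o W)^\+ x =
            \int[P]_(x in Zt @^-1` B) (pp (W x))%:E.
    by apply: eq_integral => x _; exact: epos.
  have e2 : \int[P]_(x in Zt @^-1` B) (EFin \o W)^\- x =
            \int[P]_(x in Zt @^-1` B) (pp (- W x))%:E.
    by apply: eq_integral => x _; exact: eneg.
  rewrite integralE e1 e2 in h0; rewrite e1 in fp; rewrite e2 in fn.
  exact: fin_sub0.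
have mpW := mpp mW.
have mnW : measurable_fun setT (fun x => pp (- W x)).
  by apply: (@mpp _ _ (fun x => - W x)%R); apply: measurableT_comp.
have mpf := mpp mf.
have mnf : measurable_fun setT (fun x => pp (- tnth (Zt x) i)).
  by apply: (@mpp _ _ (fun x => - tnth (Zt x) i)%R); apply: measurableT_comp.
have mg1 : measurable_fun setT (fun t : n.-tuple R => (pp (tnth t i))%:E).
  by apply/measurable_EFinP; apply: (@mpp _ _ (fun t : n.-tuple R => tnth t i)); exact: measurable_tnth.
have mg2 : measurable_fun setT (fun t : n.-tuple R => (pp (- tnth t i))%:E).
  apply/measurable_EFinP; apply: (@mpp _ _ (fun t : n.-tuple R => - tnth t i)%R).
  apply: measurableT_comp => //.
  exact: measurable_tnth.
have K1 := @key _ _ _ P _ _ _ mZ _ _ mpW mnW (fun x => pp_ge0 _) (fun x => pp_ge0 _) HB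
  _ mg1 (fun _ => pp_ge0 _).
have HB' : forall B, measurable B ->
    \int[P]_(x in Zt @^-1` B) (pp (- W x))%:E =
    \int[P]_(x in Zt @^-1` B) (pp (W x))%:E by move=> B mB; rewrite HB.
have K2 := @key _ _ _ P _ _ _ mZ _ _ mnW mpW (fun x => pp_ge0 _) (fun x => pp_ge0 _) HB'
  _ mg2 (fun _ => pp_ge0 _).
have fp : \int[P]_x (fun x0 : T => ((V x0 - c) * tnth (Zt x0) i)%:E)^\+ x \is a fin_num
  := integrable_pos_fin_num measurableT Hint.
have fn : \int[P]_x (fun x0 : T => ((V x0 - c) * tnth (Zt x0) i)%:E)^\- x \is a fin_num
  := integrable_neg_fin_num measurableT Hint.
have e1 : \int[P]_x (fun x0 : T => ((V x0 - c) * tnth (Zt x0) i)%:E)^\+ x =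
   \int[P]_x ((pp (tnth (Zt x) i))%:E * (pp (W x))%:E +
              (pp (- tnth (Zt x) i))%:E * (pp (- W x))%:E).
  by apply: eq_integral => x _; rewrite (epos (fun x0 => ((V x0 - c) * tnth (Zt x0) i)%R)) ppM EFinD !EFinM.
have e2 : \int[P]_x (fun x0 : T => ((V x0 - c) * tnth (Zt x0) i)%:E)^\- x =
   \int[P]_x ((pp (tnth (Zt x) i))%:E * (pp (- W x))%:E +
              (pp (- tnth (Zt x) i))%:E * (pp (W x))%:E).
  by apply: eq_integral => x _; rewrite (eneg (fun x0 => ((V x0 - c) * tnth (Zt x0) i)%R)) ppNM EFinD !EFinM.
rewrite /Ex.
have -> : 'E_P[(fun w => ((V w - c) * tnth (Zt w) i)%R)] =
   \int[P]_x ((V x - c) * tnth (Zt x) i)%:E by rewrite unlock.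
rewrite integralE e1 e2. rewrite e1 in fp. rewrite e2 in fn.
rewrite ge0_integralD// in fn; last 4 first.
- by move=> *; rewrite mule_ge0 // lee_fin pp_ge0.
- by apply: emeasurable_funM; apply/measurable_EFinP.
- by move=> *; rewrite mule_ge0 // lee_fin pp_ge0.
- by apply: emeasurable_funM; apply/measurable_EFinP.
rewrite !ge0_integralD//; try (by move=> *; rewrite mule_ge0 // lee_fin pp_ge0); try by apply: emeasurable_funM; apply/measurable_EFinP.
by rewrite K1 K2 subee.
Qed.
End cz.
Lemma local_ident (R : realType) (n : nat) (M : R -> 'rV[R]_n) (a : R) :
  M a = 0 -> derivable M a 1 -> derive1 M a != 0 ->
  exists2 e, 0 < e & forall t, `|t - a| < e -> M t = 0 -> t = a.
Proof.
move=> Ma0 dM L0.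
have cv : (fun h => h^-1 *: (M (h + a) - M a)) @ 0^' --> derive1 M a.
  rewrite derive1E.
  have -> : (fun h => h^-1 *: (M (h + a) - M a)) =
     (fun h => h^-1 *: ((M \o shift a) (h *: 1) - M a)).
    by apply/funext => h /=; rewrite /shift [h%:A]mulr1.
  exact: dM.
have Lpos : 0 < `|derive1 M a| by rewrite normr_gt0.
move/cvgrPdist_lt: cv => /(_ _ Lpos).
rewrite /dnbhs /within /= => /nbhs_ballP [e /= e0 He].
exists e => // t ta Mt; apply/eqP; rewrite -subr_eq0; apply/negPn/negP => ta0.
have := He (t - a); rewrite /ball /= sub0r normrN => /(_ ta ta0).
by rewrite subrK Mt Ma0 subrr scaler0 subr0 ltxx.
Qed.

Unset Implicit Arguments.
Set Strict Implicit.
Theorem theorem1 (d : measure_display) (T : measurableType d) (R : realType)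
  (P : probability T R) (n : nat)
  (x y u z0 : 'I_n -> T -> R) (beta sigma deltabar c delta0 : R)
  (* random vectors *)
  (mx : forall i, measurable_fun setT (x i))
  (my : forall i, measurable_fun setT (y i))
  (mz : forall i, measurable_fun setT (z0 i))
  (* structural model and endogeneity *)
  (Hmodel : forall i w, y i w = beta * x i w + u i w)
  (Hendo : vcov P x u != 0)
  (* A1 (coplanarity; x, r, s in W(x,y) holds by construction) *)
  (HA1orth : dotE P (resid x y) x = 0)
  (HA1iid : indep_family P (fun i w => (y i w, x i w, resid x y i w)) /\
            ident_distr P (fun i w => (y i w, x i w, resid x y i w)))
  (* A2 *)
  (Hdb : 0 < deltabar) (Hc : 0 < c)
  (Hcorr : forall delta, 0 < delta < deltabar ->
             c <= vcorr P (synth P x y u delta) x)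
  (* A3 *)
  (HA3 : forall i, P.-integrable setT (EFin \o (fun w => x i w * y i w)) /\
                   P.-integrable setT (EFin \o (fun w => x i w * x i w)))
  (HA3pos : 0 < dotE P x x)
  (* the valid coplanar instrument z0 = s(delta0), delta0 in (0, deltabar) *)
  (Hd0 : 0 < delta0 < deltabar)
  (Hz0 : forall i w, z0 i w = synth P x y u delta0 i w)
  (Hu : forall i, cond_mean_const P (u i) (tupv z0) 0)
  (* A4, homoscedastic part, for the first-stage error e = e(delta0) *)
  (HA4ind : indep_family P (fs_err P x y u delta0))
  (HA4hom : forall i, cond_mean_const P (fun w => fs_err P x y u delta0 i w ^+ 2)
                        (tupv z0) (sigma ^+ 2))
  (Hee : forall i j, cond_mean_const P
           (fun w => fs_err P x y u delta0 i w * fs_err P x y u delta0 j w)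
           (tupv z0) (if i == j then sigma ^+ 2 else 0))
  (* the DT moment vector exists *)
  (HMint : forall delta, 0 < delta < deltabar -> forall i,
     P.-integrable setT
       (EFin \o (fun w => (fs_err P x y u delta i w ^+ 2 - sigma ^+ 2) * z0 i w)))
  :
  let M := DTmoment P x y u z0 (sigma ^+ 2) in
  M delta0 = 0 /\
  ((forall delta, 0 < delta < deltabar -> derivable M delta 1) ->
   (forall delta, 0 < delta < deltabar ->
     {for delta, continuous (fun t => derive1 M t)}) ->
   derive1 M delta0 != 0 ->
   exists N : set R, nbhs delta0 N /\ (forall t, N t -> 0 < t < deltabar) /\
     forall delta, N delta -> (M delta = 0 <-> delta = delta0)).
Proof.
move=> M.
have mZt : measurable_fun setT (tupv z0).
  apply/measurable_fun_tnthP => j.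
  by rewrite (_ : _ \o _ = z0 j)//; apply/funext => w /=; rewrite /tupv tnth_mktuple.
have M0 : M delta0 = 0.
  apply/rowP => i; rewrite !mxE.
  have tz : forall w, tnth (tupv z0 w) i = z0 i w.
    by move=> w; rewrite /tupv tnth_mktuple.
  have Hint := HMint _ Hd0 i.
  rewrite (_ : (fun w => _) = (fun w => (fs_err P x y u delta0 i w ^+ 2 - sigma ^+ 2) *
     tnth (tupv z0 w) i)); last by apply/funext => w; rewrite tz.
  apply: (@cond_zero _ _ _ P n (fun w => fs_err P x y u delta0 i w ^+ 2) (tupv z0) mZt
     (sigma ^+ 2) i (HA4hom i)).
  by rewrite (_ : (fun w => _) = (fun w => (fs_err P x y u delta0 i w ^+ 2 - sigma ^+ 2) *
     z0 i w))//; apply/funext => w; rewrite /= tz.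
split=> // dM _ L0.
have [e e0 He] := local_ident M0 (dM _ Hd0) L0.
case/andP: Hd0 => d0p d0b.
pose r := Num.min e (Num.min delta0 (deltabar - delta0)).
have r0 : 0 < r by rewrite !lt_min e0 d0p subr_gt0 d0b.
exists (ball delta0 r); split; first exact: nbhsx_ballx.
have hb t : ball delta0 r t -> [/\ `|t - delta0| < e, 0 < t & t < deltabar].
  rewrite /ball /= !lt_min => /and3P[h1 h2 h3].
  split; first by rewrite distrC.
  - by move: h2; rewrite ltr_norml => /andP[? ?]; lra.
  - by move: h3; rewrite ltr_norml => /andP[? ?]; lra.
split.
  by move=> t /hb [_ ? ?]; apply/andP.
move=> t /hb [ht _ _]; split; last by move=> ->.
exact: He.
Qed.
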